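(* Let $\mathfrak{A}$ be an architecture, $\Sigma$ a finite alphabet and $k\ge1$. There is a deterministic bottom-up tree automaton $\mathcal{A}^{k\text{-stw}}_{\mathsf{edges}}$ with $2^{\mathcal{O}(k|\mathsf{Procs}|)}$ states which accepts all binary trees $\tau$ such that $\tau$ is a $k$-STT and $G_\tau$ satisfies: (1) process edges are not branching (every vertex is the source of at most one and the target of at most one $\to$-edge) and connect events of the same process; (2) data edges are disjoint (two distinct data edges share no endpoint) and respect the Writer/Reader constraints of data structures (a $d$-edge goes from an event of process $\mathsf{Writer}(d)$ to an event of process $\mathsf{Reader}(d)$).
   Context: Architecture $\mathfrak{A}=(\mathsf{Procs},\mathsf{DS},\mathsf{Writer},\mathsf{Reader})$ with finite $\mathsf{Procs}$, finite $\mathsf{DS}$, $\mathsf{Writer},\mathsf{Reader}:\mathsf{DS}\to\mathsf{Procs}$. Edge labels $\Gamma=\{\to\}\cup\mathsf{DS}$, vertex labels in $\Sigma\times\mathsf{Procs}$; the process of a vertex is its second label component. For $k\ge1$, $k$-STTs: $\tau::=(i,a,p)\mid\mathsf{Add}^\gamma_{i,j}\tau\mid\mathsf{Forget}_i\tau\mid\tau\oplus\tau$ ($a\in\Sigma,p\in\mathsf{Procs},\gamma\in\Gamma,i,j\in[k]$), with semantics $[\![\tau]\!]=(G_\tau,\chi_\tau)$: $(i,a,p)$ is a single vertex labelled $(a,p)$ colored $i$; $\mathsf{Add}^\gamma_{i,j}$ adds a $\gamma$-edge from $\chi(i)$ to $\chi(j)$ if both colors are active (nothing otherwise); $\mathsf{Forget}_i$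 deactivates color $i$; $\tau_1\oplus\tau_2$ is the disjoint union, legal only if the active color sets are disjoint. Terms are binary trees over $\{\oplus,(i,a,p),\mathsf{Add}^\gamma_{i,j},\mathsf{Forget}_i\}$. The size of a tree automaton is its number of states. *)

(* Defs.v *)
From mathcomp Require Import all_boot.
Set Implicit Arguments. Unset Strict Implicit. Unset Printing Implicit Defensive.

Section STT.
Variables (Procs DS Sigma : finType) (k : nat).

(* Edge labels Gamma = {->} U DS, encoded as option DS:
   None is the process edge label ->, Some d the data-structure label d. *)
Definition elabel : eqType := option DS.
Notation EProc := (@None DS).
Notation EData d := (@Some DS d).

Inductive sym :=
  | SVtx of 'I_k & Sigma & Procs
  | SAdd of elabel & 'I_k & 'I_k
  | SForget of 'I_k
  | SOplus.

Inductive btree :=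
  | BLeaf of sym
  | BUn of sym & btree
  | BBin of sym & btree & btree.

(* Graphs: vertices 0 .. size vlab - 1, with labels in Sigma x Procs;
   edges form a list (multiset) of (source, label, target);
   col i = Some v iff color i is active and chi(i) = v. *)
Record cgraph := CGraph {
  vlab : seq (Sigma * Procs);
  gedges : seq (nat * elabel * nat);
  col : 'I_k -> option nat }.

Definition empty_graph := CGraph [::] [::] (fun _ => None).

Definition shift_edge (n : nat) (e : nat * elabel * nat) :=
  (e.1.1 + n, e.1.2, e.2 + n).

Definition gunion (G1 G2 : cgraph) : cgraph :=
  let n := size (vlab G1) in
  CGraph (vlab G1 ++ vlab G2) (gedges G1 ++ map (shift_edge n) (gedges G2))
    (fun c => if col G1 c is Some v then Some v else omap (addn n) (col G2 c)).

(* Semantics [[tau]] = (G_tau, chi_tau); ill-formed nodes get the empty graph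
   (they are excluded by [is_stt] anyway). *)
Fixpoint sem (t : btree) : cgraph :=
  match t with
  | BLeaf (SVtx i a p) =>
      CGraph [:: (a, p)] [::] (fun c => if c == i then Some 0 else None)
  | BUn (SAdd g i j) t1 =>
      let G := sem t1 in
      match col G i, col G j with
      | Some u, Some v => CGraph (vlab G) (rcons (gedges G) (u, g, v)) (col G)
      | _, _ => G
      end
  | BUn (SForget i) t1 =>
      let G := sem t1 in
      CGraph (vlab G) (gedges G) (fun c => if c == i then None else col G c)
  | BBin SOplus t1 t2 => gunion (sem t1) (sem t2)
  | _ => empty_graph
  end.

Definition active (G : cgraph) (c : 'I_k) : bool := col G c.

Fixpoint is_stt (t : btree) : bool :=
  match t with
  | BLeaf (SVtx _ _ _) => true
  | BUn (SAdd _ _ _) t1 => is_stt t1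
  | BUn (SForget _) t1 => is_stt t1
  | BBin SOplus t1 t2 =>
      [&& is_stt t1, is_stt t2 &
          [forall c, ~~ (active (sem t1) c && active (sem t2) c)]]
  | _ => false
  end.

Definition vproc (G : cgraph) (v : nat) : option Procs :=
  omap snd (onth (vlab G) v).

Definition is_proc (g : elabel) : bool := if g is None then true else false.
Definition is_data (g : elabel) : bool := ~~ is_proc g.

Definition edge_src (e : nat * elabel * nat) := e.1.1.
Definition edge_lab (e : nat * elabel * nat) := e.1.2.
Definition edge_tgt (e : nat * elabel * nat) := e.2.

Variables (Writer Reader : DS -> Procs).

Definition proc_edges_ok (G : cgraph) : Prop :=
  (forall v : nat,
      count (fun e => is_proc (edge_lab e) && (edge_src e == v)) (gedges G) <= 1
   /\ count (fun e => is_proc (edge_lab e) && (edge_tgt e == v)) (gedges G) <= 1)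
  /\ (forall e, e \in gedges G -> is_proc (edge_lab e) ->
        vproc G (edge_src e) = vproc G (edge_tgt e)).

Definition data_edges_ok (G : cgraph) : Prop :=
  (forall (i j : nat) (e1 e2 : nat * elabel * nat),
      onth (gedges G) i = Some e1 -> onth (gedges G) j = Some e2 -> i <> j ->
      is_data (edge_lab e1) -> is_data (edge_lab e2) ->
      forall v, v \in [:: edge_src e1; edge_tgt e1] ->
                v \notin [:: edge_src e2; edge_tgt e2])
  /\ (forall (u v : nat) (d : DS), (u, Some d, v) \in gedges G ->
        vproc G u = Some (Writer d) /\ vproc G v = Some (Reader d)).

Definition graph_ok (G : cgraph) : Prop := proc_edges_ok G /\ data_edges_ok G.

End STT.

Arguments SOplus {Procs DS Sigma k}.

Record dbta (L : Type) := DBTA {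
  dstate : finType;
  delta0 : L -> dstate;
  delta1 : L -> dstate -> dstate;
  delta2 : L -> dstate -> dstate -> dstate;
  dfinal : pred dstate }.

Fixpoint run (Procs DS Sigma : finType) (k : nat)
    (A : dbta (sym Procs DS Sigma k)) (t : btree Procs DS Sigma k) : dstate A :=
  match t with
  | BLeaf a => @delta0 _ A a
  | BUn a t1 => @delta1 _ A a (run A t1)
  | BBin a t1 t2 => @delta2 _ A a (run A t1) (run A t2)
  end.

Definition accepts (Procs DS Sigma : finType) (k : nat)
    (A : dbta (sym Procs DS Sigma k)) (t : btree Procs DS Sigma k) : bool :=
  @dfinal _ A (run A t).

(* Main.v *)
Require Import Defs.
From mathcomp Require Import all_boot zify.
From Stdlib Require Import FunctionalExtensionality.
Set Implicit Arguments. Unset Strict Implicit. Unset Printing Implicit Defensive.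

Lemma count0_onth (T : Type) (p : pred T) (l : seq T) :
  count p l = 0 <-> (forall j e, onth l j = Some e -> ~~ p e).
Proof.
elim: l => [|x l IH] /=; first by split=> // _ [|j].
split.
- move=> H; have Hx : p x = false by case: (p x) H.
  rewrite Hx /= in H; move/IH: H => H [|j] e /=; first by case=> <-; rewrite Hx.
  exact: H.
- move=> H; have Hx : p x = false by apply/negbTE/(H 0).
  rewrite Hx /=; apply/IH => j e He; exact: (H j.+1).
Qed.

Lemma count1_onth (T : Type) (p : pred T) (l : seq T) :
  count p l <= 1 <-> (forall i j e1 e2, onth l i = Some e1 -> onth l j = Some e2 ->
     i <> j -> p e1 -> ~~ p e2).
Proof.
elim: l => [|x l IH] /=; first by split=> // _ [|i].
split.
- move=> H [|i] [|j] e1 e2 //=.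
  + move=> [] ? He2 _ px; subst e1; have : count p l = 0 by rewrite px in H; lia.
    by move/count0_onth => C; exact: C _ _ He2.
  + move=> He1 [] ? _ pe1; subst e2; apply/negP=> px.
    have : count p l = 0 by rewrite px in H; lia.
    by move/count0_onth/(_ _ _ He1); rewrite pe1.
  + move=> He1 He2 ij; have Hl : count p l <= 1 by lia.
    apply: (proj1 IH Hl) He1 He2 _; lia.
- move=> H.
  have Hl : count p l <= 1.
    apply/IH => i j e1 e2 h1 h2 ij; apply: (H i.+1 j.+1) => //; lia.
  case px : (p x) => /=; last by [].
  suff -> : count p l = 0 by [].
  apply/count0_onth => j e he; exact: (H 0 j.+1 x e).
Qed.

Section Auto.
Variables (Procs DS Sigma : finType) (k : nat) (Writer Reader : DS -> Procs).

Notation G := (cgraph Procs DS Sigma k).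
Notation E := (nat * elabel DS * nat)%type.

Definition PP (b : elabel DS -> bool) (sS sT : bool) (v : nat) (e : E) : bool :=
  b (edge_lab e) && ((sS && (edge_src e == v)) || (sT && (edge_tgt e == v))).

Definition cnt b sS sT (g : G) v := count (PP b sS sT v) (gedges g).

Definition ok (g : G) : Prop :=
  (forall v, cnt (@is_proc DS) true false g v <= 1) /\
  (forall v, cnt (@is_proc DS) false true g v <= 1) /\
  (forall v, cnt (@is_data DS) true true g v <= 1) /\
  (forall e, e \in gedges g -> is_proc (edge_lab e) ->
        vproc g (edge_src e) = vproc g (edge_tgt e)) /\
  (forall (u v : nat) (d : DS), (u, Some d, v) \in gedges g ->
        vproc g u = Some (Writer d) /\ vproc g v = Some (Reader d)).

Lemma graph_okE (g : G) : graph_ok Writer Reader g <-> ok g.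
Proof.
rewrite /graph_ok /proc_edges_ok /data_edges_ok /ok /cnt.
have E1 v : count (fun e => is_proc (edge_lab e) && (edge_src e == v)) (gedges g)
   = count (PP (@is_proc DS) true false v) (gedges g).
  by apply: eq_count => e; rewrite /PP /= orbF.
have E2 v : count (fun e => is_proc (edge_lab e) && (edge_tgt e == v)) (gedges g)
   = count (PP (@is_proc DS) false true v) (gedges g).
  by apply: eq_count => e; rewrite /PP /=.
have E3 : (forall (i j : nat) (e1 e2 : nat * elabel DS * nat),
      onth (gedges g) i = Some e1 -> onth (gedges g) j = Some e2 -> i <> j ->
      is_data (edge_lab e1) -> is_data (edge_lab e2) ->
      forall v, v \in [:: edge_src e1; edge_tgt e1] ->
                v \notin [:: edge_src e2; edge_tgt e2]) <->
     (forall v, count (PP (@is_data DS) true true v) (gedges g) <= 1).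
  split.
  - move=> H v; apply/count1_onth => i j e1 e2 h1 h2 ij.
    rewrite /PP /= => /andP[d1 m1]; apply/negP => /andP[d2 m2].
    have := H i j e1 e2 h1 h2 ij d1 d2 v.
    by rewrite !inE ![v == _]eq_sym m1 m2 => /(_ isT).
  - move=> H i j e1 e2 h1 h2 ij d1 d2 v m1; apply/negP => m2.
    have := (proj1 (count1_onth _ _) (H v)) i j e1 e2 h1 h2 ij.
    rewrite /PP /= d1 d2 /=.
    by move: m1 m2; rewrite !inE ![v == _]eq_sym => -> -> /(_ isT).
split.
- move=> [[H1 H2] [H3 H4]]; split; first by move=> v; rewrite -E1; case: (H1 v).
  split; first by move=> v; rewrite -E2; case: (H1 v).
  split; first by apply/E3.
  by split.
- move=> [H1 [H2 [H3 [H4 H5]]]]; split; last by split => //; apply/E3.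
  by split => // v; rewrite E1 E2.
Qed.

Definition wf (g : G) : Prop :=
  (forall e, e \in gedges g -> edge_src e < size (vlab g) /\ edge_tgt e < size (vlab g)) /\
  (forall c v, col g c = Some v -> v < size (vlab g)) /\
  (forall c1 c2 v, col g c1 = Some v -> col g c2 = Some v -> c1 = c2).

Definition info := (option Procs * bool * bool * bool)%type.
Definition st := {ffun 'I_k -> option info}.

Definition abs (g : G) : st :=
  [ffun c => if col g c is Some v then
     Some (vproc g v, 0 < cnt (@is_proc DS) true false g v,
           0 < cnt (@is_proc DS) false true g v, 0 < cnt (@is_data DS) true true g v)
   else None].

Section Union.
Variables g1 g2 : G.
Let n := size (vlab g1).

Lemma vproc_ul v : v < n -> vproc (gunion g1 g2) v = vproc g1 v.
Proof. by move=> h; rewrite /vproc /= onth_cat h. Qed.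

Lemma vproc_ur w : vproc (gunion g1 g2) (w + n) = vproc g2 w.
Proof. by rewrite /vproc /= onth_cat ltnNge leq_addl /= addnK. Qed.

Lemma count_shift_lt b sS sT v (l : seq E) : v < n ->
  count (PP b sS sT v) (map (shift_edge n) l) = 0.
Proof.
move=> hv; rewrite count_map; elim: l => //= e l ->; rewrite addn0 /PP /shift_edge /=.
have h x : (x + n == v) = false by apply/negbTE; apply/eqP; lia.
by rewrite !h !andbF.
Qed.

Lemma count_shift_ge b sS sT w (l : seq E) :
  count (PP b sS sT (w + n)) (map (shift_edge n) l) = count (PP b sS sT w) l.
Proof.
by rewrite count_map; apply: eq_count => e; rewrite /PP /shift_edge /= !eqn_add2r.
Qed.

Lemma count_wf_ge b sS sT v (l : seq E) :
  (forall e, e \in l -> edge_src e < n /\ edge_tgt e < n) -> n <= v ->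
  count (PP b sS sT v) l = 0.
Proof.
move=> H hv; rewrite (@eq_in_count _ _ pred0) ?count_pred0 // => e /H [h1 h2].
rewrite /PP /=.
have -> : (edge_src e == v) = false by apply/negbTE; apply/eqP; lia.
have -> : (edge_tgt e == v) = false by apply/negbTE; apply/eqP; lia.
by rewrite !andbF.
Qed.

Lemma cnt_union b sS sT v : cnt b sS sT (gunion g1 g2) v =
  cnt b sS sT g1 v + count (PP b sS sT v) (map (shift_edge n) (gedges g2)).
Proof. by rewrite /cnt /= count_cat. Qed.

Hypothesis wf1 : wf g1.
Hypothesis wf2 : wf g2.

Lemma cnt_union_lt b sS sT v : v < n -> cnt b sS sT (gunion g1 g2) v = cnt b sS sT g1 v.
Proof. by move=> h; rewrite cnt_union count_shift_lt // addn0. Qed.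

Lemma cnt_union_ge b sS sT w : cnt b sS sT (gunion g1 g2) (w + n) = cnt b sS sT g2 w.
Proof.
rewrite cnt_union count_shift_ge /cnt count_wf_ge //; last by rewrite leq_addl.
by case: wf1.
Qed.

Lemma cnt_bound b sS sT :
  (forall v, cnt b sS sT (gunion g1 g2) v <= 1) <->
  (forall v, cnt b sS sT g1 v <= 1) /\ (forall v, cnt b sS sT g2 v <= 1).
Proof.
split.
- move=> H; split => v.
  + case: (ltnP v n) => hv; first by rewrite -cnt_union_lt // H.
    by rewrite /cnt count_wf_ge //; case: wf1.
  + by rewrite -cnt_union_ge.
- move=> [H1 H2] v; case: (ltnP v n) => hv; first by rewrite cnt_union_lt.
  by rewrite -(subnK hv) cnt_union_ge.
Qed.

Lemma ok_union : ok (gunion g1 g2) <-> ok g1 /\ ok g2.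
Proof.
have [we1 [wc1 wi1]] := wf1.
have hE : gedges (gunion g1 g2) = gedges g1 ++ map (shift_edge n) (gedges g2) by [].
rewrite /ok !cnt_bound hE.
split.
- move=> [[a1 a2] [[b1 b2] [[c1 c2] [D W]]]].
  split; (split; [|split; [|split; [|split]]]) => //.
  + move=> e he hp; have [s1 s2] := we1 e he.
    rewrite -vproc_ul // -[in RHS]vproc_ul //; apply: D => //.
    by rewrite mem_cat he.
  + move=> u v d h; have [s1 s2] := we1 _ h.
    rewrite -vproc_ul // -[vproc g1 v]vproc_ul //; apply: W.
    by rewrite mem_cat h.
  + move=> e he hp; rewrite -!vproc_ur; apply: (D (shift_edge n e)) => //.
    by rewrite mem_cat map_f ?orbT.
  + move=> u v d h; rewrite -!vproc_ur; apply: W.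
    by rewrite mem_cat (map_f (shift_edge n) h) orbT.
- move=> [[a1 [b1 [c1 [D1 W1]]]] [a2 [b2 [c2 [D2 W2]]]]].
  split; first by split.
  split; first by split.
  split; first by split.
  split.
  + move=> e; rewrite mem_cat => /orP[he|/mapP[e2 he2 ->]] hp.
    * have [s1 s2] := we1 e he; rewrite !vproc_ul //; exact: D1.
    * by rewrite /shift_edge /= !vproc_ur; apply: D2.
  + move=> u v d; rewrite mem_cat => /orP[h|/mapP[[[a g] b'] h2 eq]].
    2: by case: eq => -> hg ->; subst g; rewrite !vproc_ur; exact: W2.
    have [s1 s2] := we1 _ h; rewrite !vproc_ul //; exact: W1.
Qed.

Lemma abs_union :
  abs (gunion g1 g2) = [ffun c => if abs g1 c is Some x then Some x else abs g2 c].
Proof.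
have [we1 [wc1 wi1]] := wf1.
apply/ffunP => c; rewrite !ffunE /=.
case h1 : (col g1 c) => [v|].
  by have hv := wc1 _ _ h1; rewrite vproc_ul // !cnt_union_lt.
case: (col g2 c) => [w|] //=.
by rewrite addnC vproc_ur !cnt_union_ge.
Qed.

Lemma wf_union : wf (gunion g1 g2).
Proof.
have [we1 [wc1 wi1]] := wf1; have [we2 [wc2 wi2]] := wf2.
have hn : n = size (vlab g1) by [].
rewrite /wf /= size_cat; split; [|split].
- move=> e; rewrite mem_cat => /orP[he|/mapP[e2 he2 ->]].
    by have [s1 s2] := we1 e he; split; lia.
  by have [s1 s2] := we2 e2 he2; rewrite /shift_edge /edge_src /edge_tgt /= in s1 s2 *; split; lia.
- move=> c v; case h1 : (col g1 c) => [w|].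
    by move=> [<-]; have := wc1 _ _ h1; lia.
  case h2 : (col g2 c) => [w|] //= [<-]; have := wc2 _ _ h2; lia.
- move=> c1 c2 v.
  case h1 : (col g1 c1) => [w1|]; case h2 : (col g1 c2) => [w2|].
  + by move=> [<-] [e]; subst w2; exact: wi1 h1 h2.
  + case h3 : (col g2 c2) => [w3|] //= [<-] [e].
    by have := wc1 _ _ h1; lia.
  + case h3 : (col g2 c1) => [w3|] //= [e] [e']; subst w2.
    by have := wc1 _ _ h2; lia.
  + case h3 : (col g2 c1) => [w3|] //=; case h4 : (col g2 c2) => [w4|] //= [<-] [e].
    have e' : w3 = w4 by lia.
    by subst w4; exact: wi2 h3 h4.
Qed.

End Union.

Definition addcond (gl : elabel DS) (x y : info) : bool :=
  let: (pi, oi, _, di) := x in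
  let: (pj, _, nj, dj) := y in
  if gl is Some d then [&& ~~ di, ~~ dj, pi == Some (Writer d) & pj == Some (Reader d)]
  else [&& ~~ oi, ~~ nj & pi == pj].

Definition upd (gl : elabel DS) (i j : 'I_k) (s : st) : st :=
  [ffun c => if s c is Some (p, o, nn, d) then
     Some (p, o || (is_proc gl && (c == i)), nn || (is_proc gl && (c == j)),
           d || (is_data gl && ((c == i) || (c == j))))
   else None].

Definition ainfo (g : G) (v : nat) : info :=
  (vproc g v, 0 < cnt (@is_proc DS) true false g v,
           0 < cnt (@is_proc DS) false true g v, 0 < cnt (@is_data DS) true true g v).

Section Add.
Variables (g : G) (gl : elabel DS) (i j : 'I_k) (u v : nat).
Hypotheses (hu : col g i = Some u) (hv : col g j = Some v).
Let g' := CGraph (vlab g) (rcons (gedges g) (u, gl, v)) (col g).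

Lemma cnt_add b sS sT x :
  cnt b sS sT g' x = cnt b sS sT g x + PP b sS sT x (u, gl, v).
Proof. by rewrite /cnt /= -cats1 count_cat /= addn0. Qed.

Lemma ok_add : ok g' <-> ok g /\ addcond gl (ainfo g u) (ainfo g v).
Proof.
have C b sS sT : cnt b sS sT g' = (fun x => cnt b sS sT g x + PP b sS sT x (u, gl, v)).
  by apply: functional_extensionality => x; exact: cnt_add.
rewrite /ok /addcond /ainfo !C /PP /edge_src /edge_tgt /edge_lab /=.
have hm e : (e \in rcons (gedges g) (u, gl, v)) = (e == (u, gl, v)) || (e \in gedges g).
  by rewrite mem_rcons inE.
case: gl hm => [d|] hm /=.
- split.
  + move=> [a1 [a2 [a3 [D W]]]].
    have c1 := a3 u; have c2 := a3 v; rewrite eqxx /= ?orbT in c1 c2.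
    have hin : (u, Some d, v) \in rcons (gedges g) (u, Some d, v) by rewrite hm eqxx.
    have [w1 w2] := W u v d hin.
    split; last first.
      have w1' : vproc g u = Some (Writer d) := w1.
      have w2' : vproc g v = Some (Reader d) := w2.
      apply/and4P; split; [rewrite -leqNgt; lia | rewrite -leqNgt; lia | exact/eqP | exact/eqP].
    split; first by move=> x; have := a1 x; lia.
    split; first by move=> x; have := a2 x; lia.
    split; first by move=> x; have := a3 x; lia.
    split; first by move=> e he; apply: D; rewrite hm he orbT.
    by move=> a b d' h; apply: W; rewrite hm h orbT.
  + move=> [[a1 [a2 [a3 [D W]]]] /and4P[n1 n2 /eqP w1 /eqP w2]].
    split; first by move=> x; rewrite addn0; apply: a1.
    split; first by move=> x; rewrite addn0; apply: a2.
    split.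
      move=> x; case: eqP => [<-|_] /=.
        by lia.
      case: eqP => [<-|_] /=; last by rewrite addn0; apply: a3.
      by lia.
    split.
      by move=> e; rewrite hm => /orP[/eqP -> //|he]; apply: D.
    move=> a b d'; rewrite hm => /orP[/eqP [-> -> ->] //|h]; exact: W.
- split.
  + move=> [a1 [a2 [a3 [D W]]]].
    have c1 := a1 u; have c2 := a2 v; rewrite eqxx /= in c1 c2.
    have hin : (u, None, v) \in rcons (gedges g) (u, None, v) by rewrite hm eqxx.
    have e1 := D _ hin isT; rewrite /= in e1.
    split; last first.
      apply/and3P; split; [rewrite -leqNgt; lia | rewrite -leqNgt; lia | exact/eqP].
    split; first by move=> x; have := a1 x; lia.
    split; first by move=> x; have := a2 x; lia.
    split; first by move=> x; have := a3 x; lia.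
    split; first by move=> e he; apply: D; rewrite hm he orbT.
    by move=> a b d' h; apply: W; rewrite hm h orbT.
  + move=> [[a1 [a2 [a3 [D W]]]] /and3P[n1 n2 /eqP e1]].
    split.
      move=> x; case: eqP => [<-|_] /=; last by rewrite addn0; apply: a1.
      by lia.
    split.
      move=> x; case: eqP => [<-|_] /=; last by rewrite addn0; apply: a2.
      by lia.
    split; first by move=> x; rewrite addn0; apply: a3.
    split.
      by move=> e; rewrite hm => /orP[/eqP -> //|he]; apply: D.
    move=> a b d'; rewrite hm => /orP[/eqP [] //|h]; exact: W.
Qed.

Hypothesis wfg : wf g.

Lemma eq_col c w : col g c = Some w -> forall x y, col g x = Some y -> (y == w) = (x == c).
Proof.
have [_ [_ wi]] := wfg.
move=> hc x y hx; apply/eqP/eqP => [e|e]; last by subst x; congruence.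
by subst y; exact: wi hx hc.
Qed.

Lemma abs_add : abs g' = upd gl i j (abs g).
Proof.
apply/ffunP => c; rewrite !ffunE /=.
case hc : (col g c) => [w|] //.
rewrite /ainfo !cnt_add /PP /edge_lab /edge_src /edge_tgt /= !addn_gt0 !lt0b.
by rewrite (eq_col hc hu) (eq_col hc hv) !orbF ![_ == c]eq_sym.
Qed.

Lemma wf_add : wf g'.
Proof.
have [we [wc wi]] := wfg.
split => //=; move=> e; rewrite mem_rcons inE => /orP[/eqP ->|]; last exact: we.
by rewrite /edge_src /edge_tgt /=; split; [exact: wc hu | exact: wc hv].
Qed.

End Add.

Section Forget.
Variables (g : G) (i : 'I_k).
Let g' := CGraph (vlab g) (gedges g) (fun c => if c == i then None else col g c).

Lemma ok_forget : ok g' <-> ok g.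
Proof. by []. Qed.

Lemma abs_forget : abs g' = [ffun c => if c == i then None else abs g c].
Proof. by apply/ffunP => c; rewrite !ffunE /=; case: (c == i). Qed.

Lemma wf_forget : wf g -> wf g'.
Proof.
move=> [we [wc wi]]; split => //=; split.
  by move=> c w; case: (c == i) => //; exact: wc.
move=> c1 c2 w; case: (c1 == i) => //; case: (c2 == i) => //; exact: wi.
Qed.

End Forget.

Definition state := option st.

Definition d0 (a : sym Procs DS Sigma k) : state :=
  if a is SVtx i _ p then
    Some [ffun c => if c == i then Some (Some p, false, false, false) else None]
  else None.

Definition d1 (a : sym Procs DS Sigma k) (q : state) : state :=
  match a, q with
  | SAdd gl i j, Some s =>
      match s i, s j with
      | Some x, Some y => if addcond gl x y then Some (upd gl i j s) else None
      | _, _ => Some s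
      end
  | SForget i, Some s => Some [ffun c => if c == i then None else s c]
  | _, _ => None
  end.

Definition d2 (a : sym Procs DS Sigma k) (q1 q2 : state) : state :=
  match a, q1, q2 with
  | SOplus, Some s1, Some s2 =>
      if [forall c, ~~ (isSome (s1 c) && isSome (s2 c))] then
        Some [ffun c => if s1 c is Some x then Some x else s2 c]
      else None
  | _, _, _ => None
  end.

Definition Aut : dbta (sym Procs DS Sigma k) :=
  @DBTA _ (option st) d0 d1 d2 (fun q => isSome q).

Lemma wf_sem (t : btree Procs DS Sigma k) : is_stt t -> wf (sem t).
Proof.
elim: t => [a|a t1 IH|a t1 IH1 t2 IH2].
- case: a => //= i x p _; split => //=; split.
    by move=> c v; case: (c == i) => // -[<-].
  by move=> c1 c2 v; case: eqP => // -> _; case: eqP.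
- case: a => //= [gl i j|i] st1; have w := IH st1.
    case hu : (col (sem t1) i) => [u|] //; case hv : (col (sem t1) j) => [v|] //.
    exact: (wf_add gl hu hv w).
  exact: (wf_forget i w).
- case: a => //= /and3P[s1 s2 _]; exact: (wf_union (IH1 s1) (IH2 s2)).
Qed.

Lemma act_abs (g : G) c : isSome (abs g c) = active g c.
Proof. by rewrite ffunE /active; case: (col g c). Qed.

Lemma run_spec (t : btree Procs DS Sigma k) :
  match run Aut t with
  | Some s => s = abs (sem t) /\ is_stt t /\ ok (sem t)
  | None => ~ (is_stt t /\ ok (sem t))
  end.
Proof.
elim: t => [a|a t1 IH|a t1 IH1 t2 IH2].
- case: a => [i x p|gl i j|i|] /=; try by case.
  split; last by split => //; do 4?split => //.
  by apply/ffunP => c; rewrite !ffunE /=; case: (c == i).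
- case: a => [i x p|gl i j|i|] /=; try by case.
  + case: (run Aut t1) IH => [s [-> [st1 ok1]]|nok] /=.
    * have w := wf_sem st1.
      rewrite !ffunE.
      case hu : (col (sem t1) i) => [u|]; case hv : (col (sem t1) j) => [v|] //=.
      have := ok_add (sem t1) gl u v; rewrite -/(ainfo (sem t1) u) -/(ainfo (sem t1) v).
      case: ifP => hc [O1 O2].
      - split; first by rewrite (abs_add gl hu hv w).
        by split => //; apply: O2.
      - by move=> [_ /O1 [_ h]]; move: h hc; rewrite /addcond /ainfo /= => ->.
    * move=> [st1 okt]; apply: nok; split => //.
      have w := wf_sem st1; move: okt.
      case hu : (col (sem t1) i) => [u|] //; case hv : (col (sem t1) j) => [v|] //.
      by move/(ok_add (sem t1) gl u v) => [].
  + case: (run Aut t1) IH => [s [-> [st1 ok1]]|nok] /=.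
    * by split; [rewrite abs_forget | split].
    * by move=> [st1 okt]; apply: nok.
- case: a => [i x p|gl i j|i|] /=; try by case.
  case: (run Aut t1) IH1 => [s1 [-> [st1 ok1]]|nok1]; last first.
    move=> [/and3P[s1' s2' _] okt]; apply: nok1; split => //.
    by have [] := (ok_union (sem t2) (wf_sem s1')).1 okt.
  case: (run Aut t2) IH2 => [s2 [-> [st2 ok2]]|nok2] /=; last first.
    move=> [/and3P[s1' s2' _] okt]; apply: nok2; split => //.
    by have [] := (ok_union (sem t2) (wf_sem s1')).1 okt.
  have w1 := wf_sem st1; have w2 := wf_sem st2.
  rewrite (eq_forallb (fun c => congr1 (fun b => ~~ (b && _)) (act_abs _ c))).
  rewrite (eq_forallb (fun c => congr1 (fun b => ~~ (_ && b)) (act_abs _ c))).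
  rewrite st1 st2 /=.
  case: ifP => hd.
    split; first by rewrite (abs_union (sem t2) w1).
    by split => //; apply/(ok_union (sem t2) w1).
  by case.
Qed.

End Auto.

Lemma arith p k : 0 < p -> 0 < k -> ((p.+1 * 2 * 2 * 2).+1 ^ k).+1 <= 2 ^ (6 * (k * p)).
Proof.
have A : forall p, 0 < p -> (p.+1 * 2 * 2 * 2).+1 <= 2 ^ (5 * p).
  elim => // q IHq _; case: q IHq => [|q] IHq; first by [].
  have := IHq isT; rewrite (mulnS 5 q.+1) expnD.
  have -> : 2 ^ 5 = 32 by [].
  lia.
move=> hp hk.
have B : (p.+1 * 2 * 2 * 2).+1 ^ k <= 2 ^ (5 * p * k) by rewrite expnM leq_exp2r // A.
have C : 0 < 2 ^ (5 * p * k) by rewrite expn_gt0.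
have D : 2 ^ (5 * p * k).+1 <= 2 ^ (6 * (k * p)).
  apply: leq_pexp2l => //; have : 0 < k * p by rewrite muln_gt0 hp hk.
  nia.
rewrite expnS in D; lia.
Qed.

Lemma stt_proc (Procs DS Sigma : finType) (k : nat) (t : btree Procs DS Sigma k) :
  is_stt t -> 0 < #|Procs|.
Proof.
elim: t => [a|a t1 IH|a t1 IH1 t2 IH2].
- by case: a => // i x p _; apply/card_gt0P; exists p.
- by case: a => //= *; apply: IH.
- by case: a => //= /and3P[s1 _ _]; apply: IH1.
Qed.

Theorem mainTheorem10 :
  exists c : nat,
  forall (Procs DS Sigma : finType) (Writer Reader : DS -> Procs) (k : nat),
    1 <= k ->
    exists A : dbta (sym Procs DS Sigma k),
      #|dstate A| <= 2 ^ (c * (k * #|Procs|)) /\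
      forall t : btree Procs DS Sigma k,
        accepts A t <-> (is_stt t /\ graph_ok Writer Reader (sem t)).
Proof.
exists 6 => Procs DS Sigma Writer Reader k hk.
case: (posnP #|Procs|) => hP.
  exists (@DBTA _ unit (fun _ => tt) (fun _ _ => tt) (fun _ _ _ => tt) (fun _ => false)).
  split; first by rewrite /= card_unit expn_gt0.
  move=> t; split => // -[st _].
  by have := stt_proc st; rewrite hP.
exists (@Aut Procs DS Sigma k Writer Reader).
split.
  rewrite /= card_option card_ffun card_option !card_prod card_option !card_bool card_ord.
  exact: arith.
move=> t; rewrite /accepts; have := run_spec Writer Reader t.
case: (run _ t) => [s [_ [st okt]]|nok] /=.
  by split => // _; split => //; apply/graph_okE.
by split => // -[st /graph_okE okt]; case: nok.
Qed.
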